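(* Let $F$ be a field of characteristic not $2$, let $G=\mathrm{GL}_2\times\mathrm{GL}_2\times\mathrm{GL}_2$ act on $V=M_2\oplus M_2$ by $(x,y)\cdot\rho(g_1,g_2,g_3)=(g_1^{-1}xg_2,\,g_1^{-1}yg_2)g_3$. The following elements form a complete set of representatives of the singular $G(F)$-orbits in $V(F)$ (those $(x,y)$ with $P(x,y)=0$), with the stated stabilizers $G_x$ in $G$: (0) $x_0=(O_2,O_2)$, $G_{x_0}=G$; (1) $x_1=(O_2,E_{12})$, $G_{x_1}=\{(\left(\begin{smallmatrix}a&*\\0&*\end{smallmatrix}\right),\left(\begin{smallmatrix}*&*\\0&b\end{smallmatrix}\right),\left(\begin{smallmatrix}*&*\\0&c\end{smallmatrix}\right))\in G: a=bc\}$; (2) $x_2=(O_2,I_2)$, $G_{x_2}=\{(g,h,\left(\begin{smallmatrix}*&*\\0&c\end{smallmatrix}\right))\in G: g=ch\}$; (3) $x_3=(E_{11},E_{12})$, with $G_{x_3}\cong G_{x_2}$; (4) $x_4=(E_{12},E_{22})$, with $G_{x_4}\cong G_{x_2}$; (5) $x_5=(E_{12},I_2)$, $G_{x_5}=\{(\left(\begin{smallmatrix}a_1&a_2\\0&a_3\end{smallmatrix}\right),\left(\begin{smallmatrix}a_1&a_2\\0&a_3\end{smallmatrix}\right)\left(\begin{smallmatrix}1/c_3&-c_2/(c_1c_3)\\0&1/c_3\end{smallmatrix}\right),\left(\begin{smallmatrix}c_1&c_2\\0&c_3\end{smallmatrix}\right))\in G: a_1c_3=a_3c_1\}$.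
   Context: Here $(x,y)g_3$ for $g_3=\left(\begin{smallmatrix}a&b\\c&d\end{smallmatrix}\right)$ means $(ax+cy,\,bx+dy)$. $O_2$ is the zero matrix, $I_2$ the identity, $E_{ij}$ the matrix unit. For $y\in M_2$ let $y^\iota=\left(\begin{smallmatrix}0&1\\-1&0\end{smallmatrix}\right){}^t y\left(\begin{smallmatrix}0&-1\\1&0\end{smallmatrix}\right)$ (the adjugate), and $P(x,y)=-\det(xy^\iota-yx^\iota)$. *)

(* Defs.v *)
From HB Require Import structures.
From mathcomp Require Import all_boot all_order all_algebra.
Set Implicit Arguments. Unset Strict Implicit. Unset Printing Implicit Defensive.
Import GRing.Theory.
Local Open Scope ring_scope.

Section Defs.
Variable F : fieldType.

Definition V := ('M[F]_2 * 'M[F]_2)%type.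
Definition G3 := ('M[F]_2 * 'M[F]_2 * 'M[F]_2)%type.

Definition mx2 (a b c d : F) : 'M[F]_2 :=
  \matrix_(i < 2, j < 2)
    if (i == 0 :> nat) then (if (j == 0 :> nat) then a else b)
    else (if (j == 0 :> nat) then c else d).

Definition E11 : 'M[F]_2 := mx2 1 0 0 0.
Definition E12 : 'M[F]_2 := mx2 0 1 0 0.
Definition E22 : 'M[F]_2 := mx2 0 0 0 1.
Definition O2 : 'M[F]_2 := 0.
Definition I2 : 'M[F]_2 := 1%:M.

Definition inG (g : G3) : Prop :=
  [/\ g.1.1 \in unitmx, g.1.2 \in unitmx & g.2 \in unitmx].

Definition mulG (g h : G3) : G3 :=
  (g.1.1 *m h.1.1, g.1.2 *m h.1.2, g.2 *m h.2).

Definition ent (m : 'M[F]_2) (i j : nat) : F := m (inord i) (inord j).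

(* (x,y).rho(g1,g2,g3) = (g1^-1 x g2, g1^-1 y g2) g3,
   where (x,y) g3 = (a x + c y, b x + d y) for g3 = ((a b)(c d)) *)
Definition act (v : V) (g : G3) : V :=
  let x' := invmx g.1.1 *m v.1 *m g.1.2 in
  let y' := invmx g.1.1 *m v.2 *m g.1.2 in
  (ent g.2 0 0 *: x' + ent g.2 1 0 *: y', ent g.2 0 1 *: x' + ent g.2 1 1 *: y').

Definition iota (y : 'M[F]_2) : 'M[F]_2 :=
  mx2 0 1 (-1) 0 *m y^T *m mx2 0 (-1) 1 0.

Definition P (v : V) : F := - \det (v.1 *m iota v.2 - v.2 *m iota v.1).

Definition singular (v : V) : Prop := P v = 0.

Definition same_orbit (v w : V) : Prop := exists g, inG g /\ act v g = w.

Definition stab (v : V) (g : G3) : Prop := inG g /\ act v g = v.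

Definition rep (i : 'I_6) : V :=
  match val i with
  | 0 => (O2, O2)
  | 1 => (O2, E12)
  | 2 => (O2, I2)
  | 3 => (E11, E12)
  | 4 => (E12, E22)
  | _ => (E12, I2)
  end.

Definition stab1_set (g : G3) : Prop :=
  inG g /\ [/\ ent g.1.1 1 0 = 0, ent g.1.2 1 0 = 0, ent g.2 1 0 = 0 &
             ent g.1.1 0 0 = ent g.1.2 1 1 * ent g.2 1 1].

Definition stab2_set (g : G3) : Prop :=
  inG g /\ ent g.2 1 0 = 0 /\ g.1.1 = ent g.2 1 1 *: g.1.2.

Definition stab5_set (g : G3) : Prop :=
  inG g /\ exists a1 a2 a3 c1 c2 c3 : F,
    [/\ g.1.1 = mx2 a1 a2 0 a3,
        g.1.2 = mx2 a1 a2 0 a3 *m mx2 (1 / c3) (- c2 / (c1 * c3)) 0 (1 / c3),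
        g.2 = mx2 c1 c2 0 c3 &
        a1 * c3 = a3 * c1].

Definition subgroup_iso (S T : G3 -> Prop) : Prop :=
  exists f : G3 -> G3,
    [/\ forall g, S g -> T (f g),
        forall g h, S g -> S h -> f (mulG g h) = mulG (f g) (f h),
        forall g h, S g -> S h -> f g = f h -> g = h &
        forall k, T k -> exists2 g, S g & f g = k].

End Defs.

(* Main.v *)
Require Import Defs.
From mathcomp Require Import all_boot all_order all_algebra.
From mathcomp Require Import ring.
Import GRing.Theory.
Local Open Scope ring_scope.

Section Infra.
Set Implicit Arguments. Unset Strict Implicit.
Variable F : fieldType.
Local Notation mx2 := (@mx2 F).

Lemma big_ord2 (f : 'I_2 -> F) : \sum_(i < 2) f i = f 0 + f 1.
Proof.
rewrite big_ord_recl big_ord_recl big_ord0 addr0.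
by congr (f _ + f _); apply: val_inj.
Qed.

Lemma mx2E (m : 'M[F]_2) : m = mx2 (m 0 0) (m 0 1) (m 1 0) (m 1 1).
Proof.
apply/matrixP => i j; rewrite !mxE.
by case: i => [[|[|//]] ?]; case: j => [[|[|//]] ?] /=;
  congr (m _ _); apply: val_inj.
Qed.

Lemma mx2_ind (Pr : 'M[F]_2 -> Prop) :
  (forall a b c d, Pr (mx2 a b c d)) -> forall m, Pr m.
Proof. by move=> H m; rewrite (mx2E m). Qed.

Lemma mx2_00 a b c d : mx2 a b c d 0 0 = a. Proof. by rewrite mxE. Qed.
Lemma mx2_01 a b c d : mx2 a b c d 0 1 = b. Proof. by rewrite mxE. Qed.
Lemma mx2_10 a b c d : mx2 a b c d 1 0 = c. Proof. by rewrite mxE. Qed.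
Lemma mx2_11 a b c d : mx2 a b c d 1 1 = d. Proof. by rewrite mxE. Qed.

Lemma mx2_eq a b c d a' b' c' d' :
  (mx2 a b c d = mx2 a' b' c' d') <-> [/\ a = a', b = b', c = c' & d = d'].
Proof.
split=> [H|[-> -> -> ->]] //.
have h00 := congr1 (fun m : 'M_2 => m 0 0) H.
have h01 := congr1 (fun m : 'M_2 => m 0 1) H.
have h10 := congr1 (fun m : 'M_2 => m 1 0) H.
have h11 := congr1 (fun m : 'M_2 => m 1 1) H.
by move: h00 h01 h10 h11; rewrite /= !mxE.
Qed.

Lemma inord0 : inord 0 = 0 :> 'I_2. Proof. by apply: val_inj; rewrite /= inordK. Qed.
Lemma inord1 : inord 1 = 1 :> 'I_2. Proof. by apply: val_inj; rewrite /= inordK. Qed.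

Lemma ent_mx2 a b c d :
  [/\ ent (mx2 a b c d) 0 0 = a, ent (mx2 a b c d) 0 1 = b,
      ent (mx2 a b c d) 1 0 = c & ent (mx2 a b c d) 1 1 = d].
Proof. by rewrite /ent inord0 inord1 !mxE. Qed.

Lemma mul_mx2 a b c d e f g h :
  mx2 a b c d *m mx2 e f g h =
  mx2 (a*e+b*g) (a*f+b*h) (c*e+d*g) (c*f+d*h).
Proof.
rewrite [LHS]mx2E; apply/mx2_eq; rewrite !mxE !big_ord2 !mxE /=; done.
Qed.

Lemma add_mx2 a b c d e f g h :
  mx2 a b c d + mx2 e f g h = mx2 (a+e) (b+f) (c+g) (d+h).
Proof. by rewrite [LHS]mx2E; apply/mx2_eq; rewrite !mxE. Qed.

Lemma opp_mx2 a b c d : - mx2 a b c d = mx2 (-a) (-b) (-c) (-d).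
Proof. by rewrite [LHS]mx2E; apply/mx2_eq; rewrite !mxE. Qed.

Lemma scale_mx2 k a b c d : k *: mx2 a b c d = mx2 (k*a) (k*b) (k*c) (k*d).
Proof. by rewrite [LHS]mx2E; apply/mx2_eq; rewrite !mxE. Qed.

Lemma tr_mx2 a b c d : (mx2 a b c d)^T = mx2 a c b d.
Proof. by rewrite [LHS]mx2E; apply/mx2_eq; rewrite !mxE. Qed.

Lemma zero_mx2 : 0 = mx2 0 0 0 0 :> 'M[F]_2.
Proof. by rewrite [LHS]mx2E; apply/mx2_eq; rewrite !mxE. Qed.

Lemma one_mx2 : 1%:M = mx2 1 0 0 1 :> 'M[F]_2.
Proof. by rewrite [LHS]mx2E; apply/mx2_eq; rewrite !mxE. Qed.

Lemma det_mx2 a b c d : \det (mx2 a b c d) = a * d - b * c.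
Proof.
rewrite (expand_det_row _ 0) !big_ord2 /cofactor !mxE /=.
rewrite !det_mx11 !mxE /=.
rewrite add0n expr0 mul1r add0n /= expr1 mulN1r; ring.
Qed.

Lemma unit_mx2 a b c d : (mx2 a b c d \in unitmx) = (a * d - b * c != 0).
Proof. by rewrite unitmxE det_mx2 unitfE. Qed.



Lemma invmx_mx2 a b c d : a * d - b * c != 0 ->
  invmx (mx2 a b c d) = mx2 (d / (a*d-b*c)) (- b / (a*d-b*c)) (- c / (a*d-b*c)) (a / (a*d-b*c)).
Proof.
move=> H.
have U : mx2 a b c d \in unitmx by rewrite unit_mx2.
rewrite -[RHS]mul1mx -(mulVmx U) -mulmxA mul_mx2.
rewrite [X in _ *m X](_ : _ = 1%:M) ?mulmx1 // one_mx2; apply/mx2_eq; split; field; done.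
Qed.

Lemma invmxM2 (A B : 'M[F]_2) : A \in unitmx -> B \in unitmx ->
  invmx (A *m B) = invmx B *m invmx A.
Proof.
move=> uA uB.
have uAB : A *m B \in unitmx by rewrite unitmx_mul uA uB.
have := mulVmx uAB.
move/(congr1 (mulmx^~ (invmx B *m invmx A))); rewrite mul1mx => <-.
rewrite -!mulmxA (mulmxA B) (mulmxV uB) mul1mx (mulmxV uA) mulmx1 //.
Qed.

Lemma act_lin (v : V F) (g : G3 F) :
  act v g = (invmx g.1.1 *m ((ent g.2 0 0 *: v.1 + ent g.2 1 0 *: v.2) *m g.1.2),
             invmx g.1.1 *m ((ent g.2 0 1 *: v.1 + ent g.2 1 1 *: v.2) *m g.1.2)).
Proof.
by rewrite /act; congr pair;
  rewrite mulmxDl mulmxDr -!scalemxAl -!scalemxAr !mulmxA.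
Qed.

Lemma actE (v w : V F) (g : G3 F) : g.1.1 \in unitmx ->
  (act v g = w <->
   ((ent g.2 0 0 *: v.1 + ent g.2 1 0 *: v.2) *m g.1.2 = g.1.1 *m w.1 /\
    (ent g.2 0 1 *: v.1 + ent g.2 1 1 *: v.2) *m g.1.2 = g.1.1 *m w.2)).
Proof.
move=> U; rewrite act_lin; case: w => w1 w2 /=; split.
  by case=> <- <-; rewrite !mulKVmx.
by case=> -> ->; rewrite !mulKmx.
Qed.

Lemma act_comp (v : V F) (g h : G3 F) : g.1.1 \in unitmx -> h.1.1 \in unitmx ->
  act (act v g) h = act v (mulG g h).
Proof.
move=> ug uh; rewrite !act_lin /mulG /= invmxM2 //.
rewrite /ent !inord0 !inord1.
congr pair; apply/matrixP => i j; rewrite !mxE !big_ord2 !mxE !big_ord2 !mxE;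
  rewrite ?big_ord2 ?mxE ?big_ord2 ?mxE ?big_ord2 ?mxE ?big_ord2 ?mxE; ring.
Qed.

End Infra.
Unset Implicit Arguments. Set Strict Implicit.

Lemma two_neq0 (F : fieldType) (hF : ~~ (2%N \in [pchar F])) : (2 : F) != 0.
Proof.
apply: contra hF => /eqP h. rewrite inE /=. by rewrite h eqxx.
Qed.
Section S.
Variable F : fieldType.
Local Notation mx2 := (@mx2 F).

Ltac mxs := rewrite /ent ?inord0 ?inord1 ?mx2_00 ?mx2_01 ?mx2_10 ?mx2_11
  /O2 /I2 /E11 /E12 /E22 ?zero_mx2 ?one_mx2
  ?(scale_mx2, opp_mx2, add_mx2, mul_mx2, tr_mx2) ?det_mx2 ?unit_mx2
  ?mx2_00 ?mx2_01 ?mx2_10 ?mx2_11.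

Lemma P_mx2 p q r s a b c d :
  P (mx2 p q r s, mx2 a b c d) =
  (p*d - q*c - a*s + b*r)^+2 + 4*(q*a - p*b)*(r*d - s*c).
Proof. rewrite /P /Defs.iota /=; mxs; ring. Qed.

Lemma ent_one : [/\ ent (1%:M : 'M[F]_2) 0 0 = 1, ent (1%:M : 'M[F]_2) 0 1 = 0,
  ent (1%:M : 'M[F]_2) 1 0 = 0 & ent (1%:M : 'M[F]_2) 1 1 = 1].
Proof. by rewrite one_mx2; apply: ent_mx2. Qed.

Lemma act_id (v : V F) : act v (1%:M, 1%:M, 1%:M) = v.
Proof.
rewrite actE /= ?unitmx1 //; case: v => x y /=.
case: ent_one => -> -> -> ->.
by rewrite !scale1r !scale0r addr0 add0r !mulmx1 !mul1mx.
Qed.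

Lemma orbit_refl (v : V F) : same_orbit v v.
Proof.
exists (1%:M, 1%:M, 1%:M); split; first by split; rewrite /= unitmx1.
exact: act_id.
Qed.

Lemma inG_mul (g h : G3 F) : inG g -> inG h -> inG (mulG g h).
Proof. by case=> ? ? ?; case=> ? ? ?; split; rewrite /= unitmx_mul; apply/andP. Qed.

Lemma orbit_trans (u v w : V F) : same_orbit u v -> same_orbit v w -> same_orbit u w.
Proof.
case=> g [Gg <-]; case=> h [Gh <-]; exists (mulG g h); split; first exact: inG_mul.
by rewrite act_comp //; [case: Gg | case: Gh].
Qed.

Lemma orbit_sym (v w : V F) : same_orbit v w -> same_orbit w v.
Proof.
case=> g [[u1 u2 u3] <-].
exists (invmx g.1.1, invmx g.1.2, invmx g.2); split.
  by split; rewrite /= unitmx_inv.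
rewrite act_comp ?unitmx_inv // /mulG /= !mulmxV //.
exact: act_id.
Qed.


Lemma orbit_mx2 (v w : V F) a1 a2 a3 a4 b1 b2 b3 b4 c1 c2 c3 c4 :
  a1 * a4 - a2 * a3 != 0 -> b1 * b4 - b2 * b3 != 0 -> c1 * c4 - c2 * c3 != 0 ->
  (c1 *: v.1 + c3 *: v.2) *m mx2 b1 b2 b3 b4 = mx2 a1 a2 a3 a4 *m w.1 ->
  (c2 *: v.1 + c4 *: v.2) *m mx2 b1 b2 b3 b4 = mx2 a1 a2 a3 a4 *m w.2 ->
  same_orbit v w.
Proof.
move=> ha hb hc e1 e2.
exists (mx2 a1 a2 a3 a4, mx2 b1 b2 b3 b4, mx2 c1 c2 c3 c4); split.
  by split; rewrite /= unit_mx2.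
rewrite actE /= ?unit_mx2 //.
by case: (ent_mx2 c1 c2 c3 c4) => -> -> -> ->.
Qed.

Lemma one_neq0' : (1 : F) * 1 - 0 * 0 != 0.
Proof. by rewrite mulr1 mul0r subr0 oner_neq0. Qed.

Lemma step_swap (x y : 'M[F]_2) : same_orbit (x, y) (y, x).
Proof.
apply: (@orbit_mx2 _ _ 1 0 0 1 1 0 0 1 0 1 1 0) => //=; try exact: one_neq0'.
- by rewrite !mul0r mulr1 sub0r oppr_eq0 oner_neq0.
- by rewrite scale0r scale1r add0r -one_mx2 mulmx1 mul1mx.
- by rewrite scale0r scale1r addr0 -one_mx2 mulmx1 mul1mx.
Qed.

Lemma step_shear (x y : 'M[F]_2) : same_orbit (x, y) (x, x + y).
Proof.
apply: (@orbit_mx2 _ _ 1 0 0 1 1 0 0 1 1 1 0 1) => //=; try exact: one_neq0'.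
- by rewrite !(mul0r, mulr0, mul1r, mulr1, subr0, sub0r, oppr_eq0) oner_neq0.
- by rewrite scale0r scale1r addr0 -one_mx2 mulmx1 mul1mx.
- by rewrite !scale1r -one_mx2 mulmx1 mul1mx.
Qed.

Lemma step_inv (x y : 'M[F]_2) : y \in unitmx ->
  same_orbit (x, y) (invmx y *m x, I2 F).
Proof.
move=> uy; exists (y, 1%:M, 1%:M); split; first by split; rewrite /= ?unitmx1.
rewrite actE //=; case: ent_one => -> -> -> ->.
by rewrite !scale1r !scale0r addr0 add0r !mulmx1 mulKVmx.
Qed.

Lemma P_swap (x y : 'M[F]_2) : P (y, x) = P (x, y).
Proof. by elim/mx2_ind: x => ????; elim/mx2_ind: y => ????; rewrite !P_mx2; ring. Qed.

Lemma P_shear (x y : 'M[F]_2) : P (x, x + y) = P (x, y).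
Proof. by elim/mx2_ind: x => ????; elim/mx2_ind: y => ????; rewrite add_mx2 !P_mx2; ring. Qed.

Lemma zero_div_trans (k L R : F) : k != 0 -> R = 0 -> L = R / k ^+ 2 -> L = 0.
Proof. by move=> _ -> ->; rewrite mul0r. Qed.

Lemma P_inv (x y : 'M[F]_2) : y \in unitmx -> P (x, y) = 0 -> P (invmx y *m x, I2 F) = 0.
Proof.
elim/mx2_ind: x => p q r s; elim/mx2_ind: y => a b c d.
rewrite unit_mx2 => hd; rewrite invmx_mx2 // /I2 one_mx2 mul_mx2 !P_mx2 => h.
apply: (@zero_div_trans (a * d - b * c) _ _ hd h); field; done.
Qed.


Lemma lin_trans (k Q L R : F) : k != 0 -> Q = 0 -> L - R = Q / k -> L = R.
Proof. by move=> _ -> /eqP; rewrite mul0r subr_eq0 => /eqP. Qed.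

Lemma repE (i : nat) (hi : (i < 6)%N) : rep F (inord i) = rep F (Ordinal hi).
Proof. by congr rep; apply: val_inj; rewrite /= inordK. Qed.

Lemma caseA_I (hF : ~~ (2%N \in [pchar F])) (z : 'M[F]_2) :
  P (z, I2 F) = 0 -> exists i, same_orbit (z, I2 F) (rep F i).
Proof.
have h2 := @two_neq0 F hF.
elim/mx2_ind: z => p q r s; rewrite /I2 one_mx2 P_mx2.
rewrite !(mul0r, mulr0, mul1r, mulr1, subr0, sub0r, addr0) => h.
have [q0|qn0] := eqVneq q 0.
  have ps : s = p.
    move: h; rewrite q0 !(mul0r, mulr0, addr0) => /eqP; rewrite expf_eq0 /= subr_eq0.
    by move/eqP.
  subst q s.
  have [r0|rn0] := eqVneq r 0.
    subst r. exists (inord 2); rewrite (@repE 2 isT) /=.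
    apply: (@orbit_mx2 _ _ 1 0 0 1 1 0 0 1 1 0 (-p) 1) => /=; mxs;
      rewrite ?(mul0r, mulr0, mul1r, mulr1, subr0, sub0r, oppr_eq0, oner_neq0) //;
      apply/mx2_eq; split; ring.
  exists (inord 5); rewrite (@repE 5 isT) /=.
  apply: (@orbit_mx2 _ _ 0 1 r 0 0 1 r 0 1 0 (-p) 1) => /=; mxs;
    rewrite ?(mul0r, mulr0, mul1r, mulr1, subr0, sub0r, oppr_eq0, oner_neq0) //;
    apply/mx2_eq; split; ring.
exists (inord 5); rewrite (@repE 5 isT) /=.
apply: (@orbit_mx2 _ _ q 0 (-((p-s)/2)) 1 q 0 (-((p-s)/2)) 1 1 0 (-((p+s)/2)) 1) => /=; mxs;
  rewrite ?(mul0r, mulr0, mul1r, mulr1, subr0, sub0r, oppr_eq0, oner_neq0) //;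
  apply/mx2_eq; split; try (field; done).
have h4 : (4 : F) != 0 by rewrite (_ : (4 : F) = 2 * 2) ?mulf_neq0 //; ring.
by apply: (@lin_trans 4 _ _ _ h4 h); field; rewrite h4 h2.
Qed.


Lemma lin2 (Q1 Q2 L R a b : F) : Q1 = 0 -> Q2 = 0 -> L - R = a * Q1 + b * Q2 -> L = R.
Proof. by move=> -> -> /eqP; rewrite !mulr0 addr0 subr_eq0 => /eqP. Qed.

Lemma caseA (hF : ~~ (2%N \in [pchar F])) (x y : 'M[F]_2) :
  y \in unitmx -> P (x, y) = 0 -> exists i, same_orbit (x, y) (rep F i).
Proof.
move=> uy hP; have [i hi] := caseA_I hF _ (P_inv x y uy hP).
by exists i; apply: orbit_trans (step_inv x y uy) hi.
Qed.

Lemma nz_by (k L : F) : k != 0 -> L = k -> L != 0.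
Proof. by move=> h ->. Qed.

Ltac nzs := rewrite ?(mul0r, mulr0, mul1r, mulr1, subr0, sub0r, oppr_eq0, oner_neq0, add0r, addr0) //.

Lemma rank1 (y : 'M[F]_2) : y != 0 -> \det y = 0 ->
  exists A B, [/\ A \in unitmx, B \in unitmx & y *m B = A *m E12 F].
Proof.
elim/mx2_ind: y => y1 y2 y3 y4; rewrite det_mx2 => ny hd.
have [y10|y1n] := eqVneq y1 0; last first.
  exists (mx2 y1 0 y3 1), (mx2 y2 1 (-y1) 0); rewrite !unit_mx2; split; nzs.
  rewrite /E12 !mul_mx2; apply/mx2_eq; split; try ring.
  by apply: (@lin_trans (-1) _ _ _ _ hd); [rewrite oppr_eq0 oner_neq0 | field; rewrite ?oppr_eq0 ?oner_neq0].
subst y1.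
have [y30|y3n] := eqVneq y3 0; last first.
  have y20 : y2 = 0.
    by move/eqP: hd; rewrite mul0r sub0r oppr_eq0 mulf_eq0 (negbTE y3n) orbF => /eqP.
  subst y2.
  exists (mx2 0 1 y3 0), (mx2 y4 1 (-y3) 0); rewrite !unit_mx2; split; nzs.
  rewrite /E12 !mul_mx2; apply/mx2_eq; split; ring.
subst y3.
have [y20|y2n] := eqVneq y2 0; last first.
  exists (mx2 y2 0 y4 1), (mx2 1 0 0 1); rewrite !unit_mx2; split; nzs.
  rewrite /E12 !mul_mx2; apply/mx2_eq; split; ring.
subst y2.
have [y40|y4n] := eqVneq y4 0.
  by subst y4; move: ny; rewrite -zero_mx2 eqxx.
exists (mx2 0 1 y4 0), (mx2 1 0 0 1); rewrite !unit_mx2; split; nzs.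
rewrite /E12 !mul_mx2; apply/mx2_eq; split; ring.
Qed.

Lemma caseB_E12 (x : 'M[F]_2) : \det x = 0 -> \det (x + E12 F) = 0 ->
  exists i, same_orbit (x, E12 F) (rep F i).
Proof.
elim/mx2_ind: x => p q r s; rewrite /E12 add_mx2 !det_mx2 => h1 h2.
have r0 : r = 0 by apply: (@lin2 _ _ _ _ 1 (-1) h1 h2); ring.
subst r; move: h1; rewrite mulr0 subr0 => /eqP; rewrite mulf_eq0 => /orP hps.
have [p0|pn] := eqVneq p 0.
  subst p; have [s0|sn] := eqVneq s 0.
    subst s; exists (inord 1); rewrite (@repE 1 isT) /=.
    apply: (@orbit_mx2 _ _ 1 0 0 1 1 0 0 1 1 0 (-q) 1) => /=; mxs; nzs;
      apply/mx2_eq; split; ring.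
  exists (inord 4); rewrite (@repE 4 isT) /=.
  apply: (@orbit_mx2 _ _ 1 0 0 1 1 0 0 1 0 (1/s) 1 (-q/s)) => /=; mxs; nzs;
    rewrite ?oppr_eq0 ?invr_eq0 //; apply/mx2_eq; split; field; done.
have s0 : s = 0 by case: hps => /eqP // p0; move: pn; rewrite p0 eqxx.
subst s; exists (inord 3); rewrite (@repE 3 isT) /=.
apply: (@orbit_mx2 _ _ 1 0 0 1 1 0 0 1 (1/p) 0 (-q/p) 1) => /=; mxs; nzs;
  rewrite ?oppr_eq0 ?invr_eq0 //; apply/mx2_eq; split; field; done.
Qed.



Lemma caseB' (x y : 'M[F]_2) : y != 0 -> \det x = 0 -> \det y = 0 -> \det (x + y) = 0 ->
  exists i, same_orbit (x, y) (rep F i).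
Proof.
move=> ny dx dy dxy; have [A [B [uA uB hyB]]] := rank1 _ ny dy.
have o1 : same_orbit (x, y) (invmx A *m x *m B, E12 F).
  exists (A, B, 1%:M); split; first by split; rewrite /= ?unitmx1.
  rewrite actE //=; case: ent_one => -> -> -> ->.
  rewrite !scale1r !scale0r addr0 add0r hyB; split => //.
  by rewrite !mulmxA mulmxV // mul1mx.
have e12 : E12 F = invmx A *m y *m B by rewrite -mulmxA hyB mulKmx.
have [i hi] : exists i, same_orbit (invmx A *m x *m B, E12 F) (rep F i).
  apply: caseB_E12.
    by rewrite !det_mulmx dx mulr0 mul0r.
  by rewrite e12 -mulmxDl -mulmxDr !det_mulmx dxy mulr0 mul0r.
by exists i; apply: orbit_trans o1 hi.
Qed.

Lemma caseB (x y : 'M[F]_2) : \det x = 0 -> \det y = 0 -> \det (x + y) = 0 ->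
  exists i, same_orbit (x, y) (rep F i).
Proof.
move=> dx dy dxy.
have [y0|ny] := eqVneq y 0; last exact: caseB'.
have [x0|nx] := eqVneq x 0.
  by subst x y; exists (inord 0); rewrite (@repE 0 isT) /=; apply: orbit_refl.
have dyx : \det (y + x) = 0 by rewrite addrC.
have [i hi] := caseB' _ _ nx dy dx dyx.
by exists i; apply: orbit_trans (step_swap x y) hi.
Qed.

Lemma classify (hF : ~~ (2%N \in [pchar F])) (v : V F) :
  P v = 0 -> exists i, same_orbit v (rep F i).
Proof.
case: v => x y hP.
have [uy|nuy] := boolP (y \in unitmx); first exact: caseA.
have [ux|nux] := boolP (x \in unitmx).
  have [i hi] := caseA hF _ _ ux (etrans (P_swap x y) hP).
  by exists i; apply: orbit_trans (step_swap x y) hi.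
have [uxy|nuxy] := boolP (x + y \in unitmx).
  have [i hi] := caseA hF _ _ uxy (etrans (P_shear x y) hP).
  by exists i; apply: orbit_trans (step_shear x y) hi.
by apply: caseB => //; apply/eqP; move: nux nuy nuxy; rewrite !unitmxE !unitfE;
  rewrite ?negbK.
Qed.


Definition Izero (v : V F) := v.1 = 0 /\ v.2 = 0.
Definition Idep (v : V F) := exists s t : F, ((s != 0) || (t != 0)) /\ s *: v.1 + t *: v.2 = 0.
Definition Ising (v : V F) := forall s t : F, \det (s *: v.1 + t *: v.2) = 0.
Definition Iker (v : V F) := exists u : 'M[F]_2, u != 0 /\ v.1 *m u = 0 /\ v.2 *m u = 0.

Lemma det_ent (m : 'M[F]_2) : \det m = ent m 0 0 * ent m 1 1 - ent m 0 1 * ent m 1 0.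
Proof. by rewrite {1}(mx2E m) det_mx2 /ent inord0 inord1. Qed.

Lemma comb_act (v : V F) (g : G3 F) (s t : F) :
  s *: (act v g).1 + t *: (act v g).2 =
  invmx g.1.1 *m (((s * ent g.2 0 0 + t * ent g.2 0 1) *: v.1 +
                   (s * ent g.2 1 0 + t * ent g.2 1 1) *: v.2) *m g.1.2).
Proof.
rewrite act_lin /=; apply/matrixP => i j.
by rewrite !(mxE, big_ord2); ring.
Qed.

Lemma Izero_act v g : Izero v -> Izero (act v g).
Proof.
case: v => x y [/= -> ->]; rewrite act_lin /=.
by rewrite !scaler0 addr0 mul0mx mulmx0.
Qed.

Lemma Idep_act v g : inG g -> Idep v -> Idep (act v g).
Proof.
case=> u1 u2 u3 [s [t [nst H]]].
set a := ent g.2 0 0; set b := ent g.2 0 1; set c := ent g.2 1 0; set d := ent g.2 1 1.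
have hD : a * d - b * c != 0 by rewrite -det_ent -unitfE -unitmxE.
exists (d * s - b * t), (a * t - c * s); split.
  apply/negPn/negP; rewrite negb_or !negbK => /andP [/eqP e1 /eqP e2].
  move: nst; apply/negP; rewrite negb_or !negbK.
  have es : s * (a * d - b * c) = a * (d * s - b * t) + b * (a * t - c * s) by ring.
  have et : t * (a * d - b * c) = c * (d * s - b * t) + d * (a * t - c * s) by ring.
  rewrite e1 e2 !mulr0 addr0 in es et.
  move/eqP: es; rewrite mulf_eq0 (negbTE hD) orbF => ->.
  by move/eqP: et; rewrite mulf_eq0 (negbTE hD) orbF => ->.
rewrite comb_act -/a -/b -/c -/d.
rewrite (_ : (d * s - b * t) * a + (a * t - c * s) * b = (a * d - b * c) * s); last by ring.
rewrite (_ : (d * s - b * t) * c + (a * t - c * s) * d = (a * d - b * c) * t); last by ring.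
by rewrite -!scalerA -scalerDr H scaler0 mul0mx mulmx0.
Qed.

Lemma Ising_act v g : inG g -> Ising v -> Ising (act v g).
Proof.
case=> u1 u2 u3 H s t; rewrite comb_act !det_mulmx H; ring.
Qed.

Lemma Iker_act v g : inG g -> Iker v -> Iker (act v g).
Proof.
case=> u1 u2 u3 [u [nu [xu yu]]].
exists (invmx g.1.2 *m u); split.
  apply: contra nu => /eqP h; apply/eqP.
  by rewrite -(mulKVmx u2 u) h mulmx0.
rewrite act_lin /=.
by split; rewrite -!mulmxA (mulmxA g.1.2) mulmxV // mul1mx mulmxDl
  -!scalemxAl ?xu ?yu !scaler0 addr0 mulmx0.
Qed.

Lemma orbit_inv (I : V F -> Prop) :
  (forall v g, inG g -> I v -> I (act v g)) ->
  forall v w, same_orbit v w -> (I v <-> I w).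
Proof.
move=> H v w hvw; split.
  by case: hvw => g [Gg <-]; apply: H.
by case: (orbit_sym _ _ hvw) => g [Gg <-]; apply: H.
Qed.


Ltac simpF := rewrite ?(mul0r, mulr0, mul1r, mulr1, subr0, sub0r, add0r, addr0, oppr0).

Lemma Izero_rep (i : 'I_6) : Izero (rep F i) <-> (val i == 0%N).
Proof.
rewrite /Izero; case: i => [[|[|[|[|[|[|//]]]]]] hi] /=; split => //=.
- by case=> _; mxs; case/mx2_eq => _ /eqP; rewrite oner_eq0.
- by case=> _; mxs; case/mx2_eq => /eqP; rewrite oner_eq0.
- by case; mxs; case/mx2_eq => /eqP; rewrite oner_eq0.
- by case; mxs; case/mx2_eq => _ /eqP; rewrite oner_eq0.
- by case; mxs; case/mx2_eq => _ /eqP; rewrite oner_eq0.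
Qed.

Lemma Idep_rep (i : 'I_6) : Idep (rep F i) <-> (val i \in [:: 0; 1; 2]%N).
Proof.
rewrite /Idep; case: i => [[|[|[|[|[|[|//]]]]]] hi] /=; split => //=;
  try (by move=> _; exists 1, 0; rewrite oner_neq0 /O2 scaler0 scale0r addr0);
  case=> s [t [nst]]; mxs; case/mx2_eq; simpF => e1 e2 e3 e4; move: nst;
  by rewrite ?e1 ?e2 ?e3 ?e4 eqxx.
Qed.

Lemma Ising_rep (i : 'I_6) : Ising (rep F i) <-> (val i \in [:: 0; 1; 3; 4]%N).
Proof.
rewrite /Ising; case: i => [[|[|[|[|[|[|//]]]]]] hi] /=; split => //=;
  try (by move=> _ s t; mxs; ring);
  by move/(_ 0 1); mxs; simpF; move/eqP; rewrite oner_eq0.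
Qed.

Lemma Iker_rep (i : 'I_6) : Iker (rep F i) <-> (val i \in [:: 0; 1; 4]%N).
Proof.
rewrite /Iker; case: i => [[|[|[|[|[|[|//]]]]]] hi] /=; split => //=;
  try (move=> _; exists (E11 F); split;
    [by rewrite /E11 zero_mx2; apply/negP => /eqP /mx2_eq [/eqP]; rewrite oner_eq0
    | by mxs; split; apply/mx2_eq; split; ring]);
  case=> u [nu]; move: nu; elim/mx2_ind: u => u1 u2 u3 u4 nu; mxs; simpF;
  case=> /mx2_eq [e1 e2 e3 e4] /mx2_eq [f1 f2 f3 f4]; move: nu;
  by rewrite ?e1 ?e2 ?e3 ?e4 ?f1 ?f2 ?f3 ?f4 -zero_mx2 eqxx.
Qed.


Lemma iff_bool (b c : bool) : (b <-> c) -> b = c.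
Proof. by case=> h1 h2; apply/idP/idP. Qed.

Lemma distinct (i j : 'I_6) : same_orbit (rep F i) (rep F j) -> i = j.
Proof.
move=> h.
have e1 := orbit_inv _ (fun v g _ => Izero_act v g) _ _ h.
have e2 := orbit_inv _ Idep_act _ _ h.
have e3 := orbit_inv _ Ising_act _ _ h.
have e4 := orbit_inv _ Iker_act _ _ h.
rewrite !Izero_rep in e1; rewrite !Idep_rep in e2; rewrite !Ising_rep in e3;
rewrite !Iker_rep in e4.
move: (iff_bool _ _ e1) (iff_bool _ _ e2) (iff_bool _ _ e3) (iff_bool _ _ e4); clear e1 e2 e3 e4 h.
case: i => [[|[|[|[|[|[|//]]]]]] hi]; case: j => [[|[|[|[|[|[|//]]]]]] hj] //= _ _ _ _;
  by apply: val_inj.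
Qed.


Lemma rep_sing (i : 'I_6) : singular (rep F i).
Proof.
rewrite /singular; case: i => [[|[|[|[|[|[|//]]]]]] hi] /=;
  rewrite /rep /= /O2 /E11 /E12 /E22 /I2 ?zero_mx2 ?one_mx2 P_mx2; ring.
Qed.

Lemma scal0 (k a b c d : F) : k * a = 0 -> k * b = 0 -> k * c = 0 -> k * d = 0 ->
  a * d - b * c != 0 -> k = 0.
Proof.
move=> e1 e2 e3 e4; apply: contraNeq => nk.
have z : forall x, k * x = 0 -> x = 0.
  by move=> x /eqP; rewrite mulf_eq0 (negbTE nk) /= => /eqP.
by rewrite (z _ e1) (z _ e2) (z _ e3) (z _ e4) mul0r subrr eqxx.
Qed.

Lemma stab2E (g : G3 F) : stab (rep F (inord 2)) g <-> stab2_set g.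
Proof.
rewrite (@repE 2 isT) /stab /stab2_set /inG /rep /=.
case: g => [[g1 g2] g3] /=.
elim/mx2_ind: g1 => p1 p2 p3 p4; elim/mx2_ind: g2 => h1 h2 h3 h4;
elim/mx2_ind: g3 => k1 k2 k3 k4.
split.
  case=> [[u1 u2 u3]]; rewrite actE //=; mxs; simpF.
  case=> /mx2_eq [e1 e2 e3 e4] /mx2_eq [f1 f2 f3 f4].
  rewrite unit_mx2 in u2.
  have k30 : k3 = 0 := scal0 _ _ _ _ _ e1 e2 e3 e4 u2.
  move: u1 u3; rewrite !unit_mx2 => u1 u3.
  split; first by split.
  by split => //; rewrite f1 f2 f3 f4.
case=> [[u1 u2 u3]]; case: (ent_mx2 k1 k2 k3 k4) => _ _ -> -> [k30 e].
split; first by split.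
rewrite actE //= e; mxs; simpF; rewrite k30; simpF.
by split; apply/mx2_eq; split; ring.
Qed.


Lemma mul0_l (x y : F) : x * y = 0 -> y != 0 -> x = 0.
Proof. by move/eqP; rewrite mulf_eq0 => /orP [/eqP //|/eqP -> /eqP]. Qed.
Lemma mul0_r (x y : F) : x * y = 0 -> x != 0 -> y = 0.
Proof. by move/eqP; rewrite mulf_eq0 => /orP [/eqP -> /eqP|/eqP //]. Qed.
Lemma nz_l (x y : F) : x * y != 0 -> x != 0.
Proof. by apply: contraNneq => ->; rewrite mul0r. Qed.
Lemma nz_r (x y : F) : x * y != 0 -> y != 0.
Proof. by apply: contraNneq => ->; rewrite mulr0. Qed.

Lemma stab0E (g : G3 F) : stab (rep F (inord 0)) g <-> inG g.
Proof.
rewrite (@repE 0 isT) /stab /rep /=; split; first by case.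
move=> G; split => //.
case: (Izero_act (O2 F, O2 F) g) => [|h1 h2]; first by split.
by rewrite [act _ _]surjective_pairing h1 h2.
Qed.

Lemma stab1E (g : G3 F) : stab (rep F (inord 1)) g <-> stab1_set g.
Proof.
rewrite (@repE 1 isT) /stab /stab1_set /inG /rep /=.
case: g => [[g1 g2] g3] /=.
elim/mx2_ind: g1 => p1 p2 p3 p4; elim/mx2_ind: g2 => h1 h2 h3 h4;
elim/mx2_ind: g3 => k1 k2 k3 k4.
case: (ent_mx2 p1 p2 p3 p4) => -> _ -> _.
case: (ent_mx2 h1 h2 h3 h4) => _ _ -> ->.
case: (ent_mx2 k1 k2 k3 k4) => _ _ -> ->.
split.
  case=> [[u1 u2 u3]]; rewrite actE //=; mxs; simpF.
  case=> /mx2_eq [e1 e2 e3 e4] /mx2_eq [f1 f2 f3 f4].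
  move: u1 u2 u3; rewrite !unit_mx2 => u1 u2 u3.
  split; first by split.
  have p30 : p3 = 0 by [].
  have np1 : p1 != 0.
    by move: u1; rewrite p30 mulr0 subr0; exact: nz_l.
  have nk4 : k4 != 0 by apply: (@nz_l _ h4); rewrite f2.
  have nh4 : h4 != 0 by apply: (@nz_r k4); rewrite f2.
  split => //.
  - exact: (mul0_r _ _ f1 nk4).
  - exact: (mul0_l _ _ e2 nh4).
  - by rewrite -f2 mulrC.
case=> [[u1 u2 u3]] [p30 h30 k30 e]; split; first by split.
rewrite actE //=; mxs; simpF; rewrite p30 h30 k30 e; simpF.
by split; apply/mx2_eq; split; ring.
Qed.


Ltac fldd := field; repeat (apply/andP; split); by [].

Lemma stab5E (g : G3 F) : stab (rep F (inord 5)) g <-> stab5_set g.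
Proof.
rewrite (@repE 5 isT) /stab /stab5_set /inG /rep /=.
case: g => [[g1 g2] g3] /=.
elim/mx2_ind: g1 => p1 p2 p3 p4; elim/mx2_ind: g2 => h1 h2 h3 h4;
elim/mx2_ind: g3 => k1 k2 k3 k4.
split.
  case=> [[u1 u2 u3]]; rewrite actE //=; mxs; simpF.
  case=> /mx2_eq [e1 e2 e3 e4] /mx2_eq [f1 f2 f3 f4].
  move: u1 u2 u3; rewrite !unit_mx2 => u1 u2 u3.
  split; first by split.
  have k30 : k3 = 0.
    have [//|nk3] := eqVneq k3 0.
    have h30 := mul0_r _ _ e3 nk3.
    rewrite h30 mulr0 addr0 in e1.
    by move: u2; rewrite (mul0_r _ _ e1 nk3) h30 !mul0r mulr0 subr0 eqxx.
  subst k3; move: e4 e3 e1 e2; simpF => p30 _ e1 e2.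
  move: e1 e2 f1 f2 f3 f4 u1; subst p3 => e1 e2 f1 f2 f3 f4 u1.
  move: u3; simpF => u3.
  have nk1 := nz_l _ _ u3; have nk4 := nz_r _ _ u3.
  have h30 := mul0_r _ _ f3 nk4; subst h3.
  move: f1; simpF => f1; move: e2 u1; subst p1 p2 p4 => e2 u1.
  have eh1 : h1 = k1 * h4 / k4.
    apply: (@lin_trans k4 (k4 * h1 - k1 * h4)) => //; first by rewrite e2 subrr.
    by field.
  subst h1.
  exists (k4 * (k1 * h4 / k4)), (k4 * h2 + k2 * h4), (k4 * h4), k1, k2, k4.
  split => //.
    by rewrite mul_mx2; apply/mx2_eq; split; fldd.
  by fldd.
case=> [[u1 u2 u3]] [a1 [a2 [a3 [c1 [c2 [c3 [/mx2_eq [e1 e2 e3 e4] eh /mx2_eq [f1 f2 f3 f4] ea]]]]]]].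
subst p1 p2 p3 p4 k1 k2 k3 k4.
move: eh; rewrite mul_mx2 => /mx2_eq [e1 e2 e3 e4]; subst h1 h2 h3 h4.
split; first by split.
have [nc1 nc3] : c1 != 0 /\ c3 != 0.
  move: u3; rewrite unit_mx2 mulr0 subr0 => u3.
  by split; [apply: (nz_l _ _ u3) | apply: (nz_r _ _ u3)].
have ea1 : a1 = a3 * c1 / c3 by rewrite -ea; field.
subst a1.
rewrite actE //=; mxs; simpF.
by split; apply/mx2_eq; split; fldd.
Qed.


Lemma stab3E (g : G3 F) : stab (rep F (inord 3)) g <->
  inG g /\ ent g.1.1 1 0 = 0 /\ g.2^T *m g.1.2 = ent g.1.1 0 0 *: 1%:M.
Proof.
rewrite (@repE 3 isT) /stab /inG /rep /=.
case: g => [[g1 g2] g3] /=.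
elim/mx2_ind: g1 => p1 p2 p3 p4; elim/mx2_ind: g2 => h1 h2 h3 h4;
elim/mx2_ind: g3 => k1 k2 k3 k4.
case: (ent_mx2 p1 p2 p3 p4) => -> _ -> _.
split.
  case=> [[u1 u2 u3]]; rewrite actE //=; mxs; simpF.
  case=> /mx2_eq [e1 e2 e3 e4] /mx2_eq [f1 f2 f3 f4].
  move: u1 u2 u3; rewrite !unit_mx2 => u1 u2 u3.
  split; first by split.
  split; first by rewrite e3.
  by apply/mx2_eq; split.
case=> [[u1 u2 u3]] [p30]; mxs; simpF; case/mx2_eq => e1 e2 e3 e4.
move: u1 u2 u3; rewrite !unit_mx2 => u1 u2 u3.
split; first by split.
rewrite actE ?unit_mx2 //=; mxs; simpF.
by split; apply/mx2_eq; split.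
Qed.

Lemma stab4E (g : G3 F) : stab (rep F (inord 4)) g <->
  inG g /\ ent g.1.2 1 0 = 0 /\ g.1.1 = ent g.1.2 1 1 *: g.2.
Proof.
rewrite (@repE 4 isT) /stab /inG /rep /=.
case: g => [[g1 g2] g3] /=.
elim/mx2_ind: g1 => p1 p2 p3 p4; elim/mx2_ind: g2 => h1 h2 h3 h4;
elim/mx2_ind: g3 => k1 k2 k3 k4.
case: (ent_mx2 h1 h2 h3 h4) => _ _ -> ->.
split.
  case=> [[u1 u2 u3]]; rewrite actE //=; mxs; simpF.
  case=> /mx2_eq [e1 e2 e3 e4] /mx2_eq [f1 f2 f3 f4].
  move: u1 u2 u3; rewrite !unit_mx2 => u1 u2 u3.
  split; first by split.
  have h30 : h3 = 0.
    by apply: (scal0 _ _ _ _ _ _ _ _ _ u3); rewrite mulrC.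
  subst h3; split => //.
  by rewrite -e2 -f2 -e4 -f4 !(mulrC h4).
case=> [[u1 u2 u3]] [h30 e]; split; first by split.
rewrite actE //= e; mxs; simpF; rewrite h30; simpF.
by split; apply/mx2_eq; split; ring.
Qed.


Lemma iso4 : subgroup_iso (stab (rep F (inord 4))) (stab (rep F (inord 2))).
Proof.
exists (fun g : G3 F => (g.1.1, g.2, g.1.2)); split.
- move=> [[g1 g2] g3] /stab4E /= [[u1 u2 u3] [h30 e]]; apply/stab2E.
  by split; [split | split].
- by [].
- by move=> [[a b] c] [[a' b'] c'] _ _ /= [-> -> ->].
- move=> [[k1 k2] k3] /stab2E [[u1 u2 u3] /= [k30 e]].
  by exists (k1, k3, k2) => //; apply/stab4E; split; [split | split].
Qed.

Lemma ent11_mul (A B : 'M[F]_2) : ent A 1 0 = 0 -> ent (A *m B) 1 1 = ent A 1 1 * ent B 1 1.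
Proof.
rewrite /ent !inord0 !inord1 !mxE big_ord2 => ->; ring.
Qed.

Lemma iso3 : subgroup_iso (stab (rep F (inord 3))) (stab (rep F (inord 2))).
Proof.
exists (fun g : G3 F => (ent g.1.1 1 1 *: g.2, g.2, g.1.1)); split.
- move=> [[g1 g2] g3] /stab3E /= [[u1 u2 u3] [p30 e]]; apply/stab2E.
  split => //; split => //=.
  have n11 : ent g1 1 1 != 0.
    move: u1; rewrite unitmxE det_ent p30 mulr0 subr0 unitfE.
    exact: nz_r.
  by rewrite unitmxZ // unitfE.
- move=> [[g1 g2] g3] [[h1 h2] h3] /stab3E /= [_ [p30 _]] _ /=.
  by rewrite ent11_mul // /mulG /= -scalemxAl -scalemxAr scalerA.
- move=> [[g1 g2] g3] [[h1 h2] h3] /stab3E /= [[u1 u2 u3] [p30 e]]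
    /stab3E /= [_ [_ e']] [_ e3 e1]; subst h3 h1.
  have ut : g3^T \in unitmx by rewrite unitmx_tr.
  by rewrite -(mulKmx ut g2) -(mulKmx ut h2) e e'.
- move=> [[k1 k2] k3] /stab2E [[u1 u2 u3] /= [k30 e]].
  have n00 : ent k3 0 0 != 0.
    move: u3; rewrite unitmxE det_ent k30 mulr0 subr0 unitfE.
    exact: nz_l.
  exists (k3, ent k3 0 0 *: invmx k2^T, k2); last by rewrite /= e.
  apply/stab3E => /=; split; last split => //.
    by split => //; rewrite unitmxZ ?unitfE // unitmx_inv unitmx_tr.
  by rewrite -scalemxAr mulmxV // unitmx_tr.
Qed.

End S.

Theorem proposition2p1 (F : fieldType) (hF : ~~ (2%N \in [pchar F])) :
  (* the x_i are singular representatives, one for each singular orbit *)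
  (forall i : 'I_6, singular (rep F i)) /\
  (forall v : V F, singular v -> exists i : 'I_6, same_orbit v (rep F i)) /\
  (forall i j : 'I_6, same_orbit (rep F i) (rep F j) -> i = j) /\
  (* stabilizers *)
  (forall g, stab (rep F (inord 0)) g <-> inG g) /\
  (forall g, stab (rep F (inord 1)) g <-> stab1_set g) /\
  (forall g, stab (rep F (inord 2)) g <-> stab2_set g) /\
  subgroup_iso (stab (rep F (inord 3))) (stab (rep F (inord 2))) /\
  subgroup_iso (stab (rep F (inord 4))) (stab (rep F (inord 2))) /\
  (forall g, stab (rep F (inord 5)) g <-> stab5_set g).
Proof.
split; first exact: rep_sing.
split; first exact: classify hF.
split; first exact: distinct.
split; first exact: stab0E.
split; first exact: stab1E.
split; first exact: stab2E.
split; first exact: iso3.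
split; first exact: iso4.
exact: stab5E.
Qed.
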